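(* Let $\Pi=(\iota,\tau,\beta)$ be a safety problem over a vocabulary $\Sigma$, let $\varphi(x)$ be a formula over $\Sigma$ with free variable $x$, and let $w$ be a fresh constant symbol not in $\Sigma$. Let $\xi$ be a soundness invariant for $\varphi(w)$ (a closed formula over $\Sigma\cup\{m\}$) and let $\psi$ be a safe inductive invariant of $\Pi^w_\varphi$ (a closed formula over $\Sigma\cup\{w\}$). Then $\xi[\psi/m]$, which is a closed formula over $\Sigma$, is a safe inductive invariant of $\Pi$.
   Context: A first-order vocabulary $\Sigma$ consists of constant, function and relation symbols; $\Sigma'=\{a' : a\in\Sigma\}$ is a disjoint copy, and for a formula $\varphi$, $\varphi'$ denotes $\varphi$ with every vocabulary symbol replaced by its primed copy. A safety problem over $\Sigma$ is a triple $(\iota,\tau,\beta)$, where $\iota,\beta$ are closed formulas over $\Sigma$ and $\tau$ is a closed formula over $\Sigma\uplus\Sigma'$. $A\Rightarrow B$ means the implication $A\to B$ is valid. A closed formula $\chi$ is a safe inductive invariant of $(\iota,\tau,\beta)$ if $\iota\Rightarrow\chi$, $\chi\wedge\tau\Rightarrow\chi'$ and $\chi\Rightarrow\neg\beta$. $\varphi(w)$ is $\varphi$ with $x$ replaced by $w$. The safety problem $\Pi^w_\varphi$ over $\Sigma\cup\{w\}$ is $\big(\iota\wedge\varphi(w),\ \varphi(w)\wedge\tau\wedge w'=w\wedge(\varphi(w))',\ \beta\wedge\varphi(w)\big)$. With $m$ a fresh unary relation symbol, the safety problem $\Pi^{\mathrm{sound}}_\varphi$ over $\Sigma\cup\{m\}$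 is $\big(\iota\wedge\forall x.\,\varphi(x)\to m(x),\ \tau\wedge\forall x.\,(m(x)\wedge\varphi(x)\wedge\varphi'(x))\to m'(x),\ \beta\wedge\forall x.\,\varphi(x)\to\neg m(x)\big)$; a soundness invariant for $\varphi(w)$ is a safe inductive invariant of $\Pi^{\mathrm{sound}}_\varphi$. $\xi[\psi/m]$ denotes the formula obtained from $\xi$ by replacing every atom $m(t)$, for any term $t$, with $\psi[t/w]$ ($\psi$ with $w$ replaced by $t$), where bound variables of $\xi$ and $\psi$ are assumed distinct. *)

(* Defs.v *)
From mathcomp Require Import all_boot.

Set Implicit Arguments.
Unset Strict Implicit.
Unset Printing Implicit Defensive.

(* Vocabularies.  Constant symbols are function symbols of arity 0.    *)

Record funsig := FunSig { fsym : Type; far : fsym -> nat }.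
Record vocab := Vocab { funs : funsig; rsym : Type; rar : rsym -> nat }.

Inductive term (F : funsig) : Type :=
| tvar : nat -> term F
| tapp : forall f : fsym F, ('I_(far f) -> term F) -> term F.

(* First-order formulas with equality, de Bruijn binders. *)
Inductive formula (S : vocab) : Type :=
| fbot : formula S
| fequ : term (funs S) -> term (funs S) -> formula S
| frel : forall r : rsym S, ('I_(rar r) -> term (funs S)) -> formula S
| fnot : formula S -> formula S
| fand : formula S -> formula S -> formula S
| forr : formula S -> formula S -> formula S
| fimp : formula S -> formula S -> formula S
| fall : formula S -> formula S
| fex  : formula S -> formula S.

Arguments tvar {F}.
Arguments fbot {S}.
Arguments tapp {F} f _.
Arguments frel {S} r _.
Arguments fequ {S} _ _.

Fixpoint tbound F (n : nat) (t : term F) : Prop :=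
  match t with
  | tvar i => i < n
  | tapp f args => forall i, tbound n (args i)
  end.

Fixpoint fbound S (n : nat) (a : formula S) : Prop :=
  match a with
  | fbot => True
  | fequ t1 t2 => tbound n t1 /\ tbound n t2
  | frel r args => forall i, tbound n (args i)
  | fnot b => fbound n b
  | fand b c | forr b c | fimp b c => fbound n b /\ fbound n c
  | fall b | fex b => fbound n.+1 b
  end.

Definition closed S (a : formula S) : Prop := fbound 0 a.

Record structure (S : vocab) := mkStructure {
  dom : Type;
  dom_pt : dom;
  ifun : forall f : fsym (funs S), ('I_(far f) -> dom) -> dom;
  irel : forall r : rsym S, ('I_(rar r) -> dom) -> Prop }.

Definition scons (T : Type) (d : T) (e : nat -> T) : nat -> T :=
  fun n => if n is k.+1 then e k else d.

Fixpoint teval S (M : structure S) (e : nat -> dom M) (t : term (funs S)) : dom M :=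
  match t with
  | tvar i => e i
  | tapp f args => @ifun S M f (fun i => @teval S M e (args i))
  end.

Fixpoint sat S (M : structure S) (e : nat -> dom M) (a : formula S) : Prop :=
  match a with
  | fbot => False
  | fequ t1 t2 => @teval S M e t1 = @teval S M e t2
  | frel r args => @irel S M r (fun i => @teval S M e (args i))
  | fnot b => ~ @sat S M e b
  | fand b c => @sat S M e b /\ @sat S M e c
  | forr b c => @sat S M e b \/ @sat S M e c
  | fimp b c => @sat S M e b -> @sat S M e c
  | fall b => forall d : dom M, @sat S M (scons d e) b
  | fex b => exists d : dom M, @sat S M (scons d e) b
  end.

Definition valid S (a : formula S) : Prop := forall (M : structure S) (e : nat -> dom M), @sat S M e a.

Definition entails S (a b : formula S) : Prop := valid (fimp a b).

(* F extended with one fresh constant (None). *)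
Definition addc (F : funsig) : funsig :=
  @FunSig (option (fsym F)) (fun o => if o is Some f then far f else 0).
Definition vaddc (S : vocab) : vocab := @Vocab (addc (funs S)) (rsym S) (@rar S).
(* Sigma ∪ {m}, m a fresh unary relation (None) *)
Definition vaddr (S : vocab) : vocab :=
  @Vocab (funs S) (option (rsym S)) (fun o => if o is Some r then rar r else 1).
(* Sigma ⊎ Sigma' : inl = unprimed symbols, inr = primed copies *)
Definition vdouble (S : vocab) : vocab :=
  @Vocab (@FunSig (fsym (funs S) + fsym (funs S))
                  (fun s => match s with inl f => far f | inr f => far f end))
         (rsym S + rsym S)
         (fun s => match s with inl r => rar r | inr r => rar r end).

Record vmorph (A B : vocab) := VMorph {
  mf : fsym (funs A) -> fsym (funs B);
  mf_ar : forall f, far (mf f) = far f;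
  mr : rsym A -> rsym B;
  mr_ar : forall r, rar (mr r) = rar r }.

Fixpoint tren (F G : funsig) (g : fsym F -> fsym G)
    (hg : forall f, far (g f) = far f) (t : term F) : term G :=
  match t with
  | tvar i => tvar i
  | tapp f args => tapp (g f) (fun i => tren hg (args (cast_ord (hg f) i)))
  end.

Fixpoint fren (A B : vocab) (h : vmorph A B) (a : formula A) : formula B :=
  match a with
  | fbot => fbot
  | fequ t1 t2 => fequ (tren (mf_ar h) t1) (tren (mf_ar h) t2)
  | frel r args =>
      frel (mr h r) (fun i => tren (mf_ar h) (args (cast_ord (mr_ar h r) i)))
  | fnot b => fnot (fren h b)
  | fand b c => fand (fren h b) (fren h c)
  | forr b c => forr (fren h b) (fren h c)
  | fimp b c => fimp (fren h b) (fren h c)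
  | fall b => fall (fren h b)
  | fex b => fex (fren h b)
  end.

Definition incl_c (S : vocab) : vmorph S (vaddc S) :=
  @VMorph S (vaddc S) (@Some _) (fun _ => erefl) id (fun _ => erefl).
Definition incl_r (S : vocab) : vmorph S (vaddr S) :=
  @VMorph S (vaddr S) id (fun _ => erefl) (@Some _) (fun _ => erefl).
Definition vleft (S : vocab) : vmorph S (vdouble S) :=
  @VMorph S (vdouble S) (@inl _ _) (fun _ => erefl) (@inl _ _) (fun _ => erefl).
Definition vright (S : vocab) : vmorph S (vdouble S) :=
  @VMorph S (vdouble S) (@inr _ _) (fun _ => erefl) (@inr _ _) (fun _ => erefl).

Definition sum_map (A B : Type) (g : A -> B) (s : A + A) : B + B :=
  match s with inl a => inl (g a) | inr a => inr (g a) end.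

Lemma dc_far S (f : fsym (funs (vdouble S))) :
  far (sum_map (@Some _) f : fsym (funs (vdouble (vaddc S)))) = far f.
Proof. by case: f. Qed.
Lemma dc_rar S (r : rsym (vdouble S)) :
  rar (sum_map id r : rsym (vdouble (vaddc S))) = rar r.
Proof. by case: r. Qed.
Lemma dr_far S (f : fsym (funs (vdouble S))) :
  far (sum_map id f : fsym (funs (vdouble (vaddr S)))) = far f.
Proof. by case: f. Qed.
Lemma dr_rar S (r : rsym (vdouble S)) :
  rar (sum_map (@Some _) r : rsym (vdouble (vaddr S))) = rar r.
Proof. by case: r. Qed.

Definition dbl_c (S : vocab) : vmorph (vdouble S) (vdouble (vaddc S)) :=
  @VMorph (vdouble S) (vdouble (vaddc S)) (sum_map (@Some _)) (@dc_far S)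
          (sum_map id) (@dc_rar S).
Definition dbl_r (S : vocab) : vmorph (vdouble S) (vdouble (vaddr S)) :=
  @VMorph (vdouble S) (vdouble (vaddr S)) (sum_map id) (@dr_far S)
          (sum_map (@Some _)) (@dr_rar S).

Definition unprimed (S : vocab) (a : formula S) : formula (vdouble S) := fren (vleft S) a.
Definition prime (S : vocab) (a : formula S) : formula (vdouble S) := fren (vright S) a.

Fixpoint tsubst (F : funsig) (sigma : nat -> term F) (t : term F) : term F :=
  match t with
  | tvar i => sigma i
  | tapp f args => tapp f (fun i => tsubst sigma (args i))
  end.

Definition up (F : funsig) (sigma : nat -> term F) : nat -> term F :=
  scons (tvar 0) (fun i => tsubst (fun j => tvar j.+1) (sigma i)).

Fixpoint fsubst (S : vocab) (sigma : nat -> term (funs S)) (a : formula S) : formula S :=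
  match a with
  | fbot => fbot
  | fequ t1 t2 => fequ (tsubst sigma t1) (tsubst sigma t2)
  | frel r args => frel r (fun i => tsubst sigma (args i))
  | fnot b => fnot (fsubst sigma b)
  | fand b c => fand (fsubst sigma b) (fsubst sigma c)
  | forr b c => forr (fsubst sigma b) (fsubst sigma c)
  | fimp b c => fimp (fsubst sigma b) (fsubst sigma c)
  | fall b => fall (fsubst (up sigma) b)
  | fex b => fex (fsubst (up sigma) b)
  end.

Definition wconst (F : funsig) : term (addc F) :=
  @tapp (addc F) None (fun _ => tvar 0).

(* phi(w): phi over Sigma with free variable x (de Bruijn index 0),
   x replaced by w *)
Definition phi_w (S : vocab) (phi : formula S) : formula (vaddc S) :=
  @fsubst (vaddc S) (scons (wconst (funs S)) (fun k => tvar k)) (fren (incl_c S) phi).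

Definition tshift (F : funsig) (k : nat) (t : term F) : term F :=
  tsubst (fun i => tvar (i + k)) t.

Fixpoint tsubw (F : funsig) (k : nat) (t : term F) (s : term (addc F)) : term F :=
  match s with
  | tvar i => tvar i
  | tapp o args =>
      match o as o' return ('I_(far (o' : fsym (addc F))) -> term (addc F)) -> term F with
      | Some f => fun args' => tapp f (fun i => tsubw k t (args' i))
      | None => fun _ => tshift k t
      end args
  end.

Fixpoint fsubw (S : vocab) (k : nat) (t : term (funs S)) (a : formula (vaddc S))
    : formula S :=
  match a with
  | fbot => fbot
  | fequ t1 t2 => @fequ S (tsubw k t t1) (tsubw k t t2)
  | frel r args => @frel S r (fun i => tsubw k t (args i))
  | fnot b => fnot (fsubw k t b)
  | fand b c => fand (fsubw k t b) (fsubw k t c)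
  | forr b c => forr (fsubw k t b) (fsubw k t c)
  | fimp b c => fimp (fsubw k t b) (fsubw k t c)
  | fall b => fall (fsubw k.+1 t b)
  | fex b => fex (fsubw k.+1 t b)
  end.

Definition subst_w (S : vocab) (psi : formula (vaddc S)) (t : term (funs S)) : formula S :=
  fsubw 0 t psi.

Fixpoint subst_m (S : vocab) (psi : formula (vaddc S)) (xi : formula (vaddr S))
    : formula S :=
  match xi with
  | fbot => fbot
  | fequ t1 t2 => @fequ S t1 t2
  | frel o args =>
      match o as o' return ('I_(rar (o' : rsym (vaddr S))) -> term (funs S)) -> formula S with
      | Some r => fun args' => @frel S r args'
      | None => fun args' => subst_w psi (args' ord0)
      end args
  | fnot b => fnot (subst_m psi b)
  | fand b c => fand (subst_m psi b) (subst_m psi c)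
  | forr b c => forr (subst_m psi b) (subst_m psi c)
  | fimp b c => fimp (subst_m psi b) (subst_m psi c)
  | fall b => fall (subst_m psi b)
  | fex b => fex (subst_m psi b)
  end.

Record safety (S : vocab) := Safety {
  init : formula S; trans : formula (vdouble S); bad : formula S }.

Definition is_safety (S : vocab) (P : safety S) : Prop :=
  closed (init P) /\ closed (trans P) /\ closed (bad P).

Definition safe_inv (S : vocab) (P : safety S) (chi : formula S) : Prop :=
  [/\ closed chi,
      entails (init P) chi,
      entails (fand (unprimed chi) (trans P)) (prime chi)
    & entails chi (fnot (bad P))].

Definition Pi_w (S : vocab) (P : safety S) (phi : formula S) : safety (vaddc S) :=
  let pw := phi_w phi in
  let w0 : term (funs (vdouble (vaddc S))) := @tapp (funs (vdouble (vaddc S))) (inl None) (fun _ => tvar 0) in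
  let w1 : term (funs (vdouble (vaddc S))) := @tapp (funs (vdouble (vaddc S))) (inr None) (fun _ => tvar 0) in
  @Safety (vaddc S)
    (fand (fren (incl_c S) (init P)) pw)
    (fand (fand (fand (unprimed pw) (fren (dbl_c S) (trans P))) (fequ w1 w0)) (prime pw))
    (fand (fren (incl_c S) (bad P)) pw).

(* Pi^sound_phi over Sigma ∪ {m}; phi(x) with x = de Bruijn 0 bound by the
   quantifier *)
Definition Pi_sound (S : vocab) (P : safety S) (phi : formula S) : safety (vaddr S) :=
  let phim := fren (incl_r S) phi in
  let m0 : formula (vaddr S) := @frel (vaddr S) None (fun _ => tvar 0) in
  let ml : formula (vdouble (vaddr S)) := @frel (vdouble (vaddr S)) (inl None) (fun _ => tvar 0) in
  let mr : formula (vdouble (vaddr S)) := @frel (vdouble (vaddr S)) (inr None) (fun _ => tvar 0) in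
  @Safety (vaddr S)
    (fand (fren (incl_r S) (init P)) (fall (fimp phim m0)))
    (fand (fren (dbl_r S) (trans P))
          (fall (fimp (fand (fand ml (unprimed phim)) (prime phim)) mr)))
    (fand (fren (incl_r S) (bad P)) (fall (fimp phim (fnot m0)))).

Definition soundness_inv (S : vocab) (P : safety S) (phi : formula S)
    (xi : formula (vaddr S)) : Prop := safe_inv (Pi_sound P phi) xi.

(* Main.v *)
Require Import Defs.
From mathcomp Require Import all_boot.
From Stdlib Require Import FunctionalExtensionality.

Set Implicit Arguments.
Unset Strict Implicit.
Unset Printing Implicit Defensive.

Lemma cast_fun T n (H : n = n) (g : 'I_n -> T) : (fun i => g (cast_ord H i)) = g.
Proof. apply: functional_extensionality => i; congr g; exact: val_inj. Qed.

Definition Mc S (M : structure S) (d : dom M) : structure (vaddc S) :=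
  @mkStructure (vaddc S) (dom M) (dom_pt M)
    (fun o => match o as o' return ('I_(far (o' : Defs.fsym (funs (vaddc S)))) -> dom M) -> dom M with
              | Some f => @ifun _ M f | None => fun _ => d end)
    (@irel _ M).

Definition Mr S (M : structure S) (P : dom M -> Prop) : structure (vaddr S) :=
  @mkStructure (vaddr S) (dom M) (dom_pt M) (@ifun _ M)
    (fun o => match o as o' return ('I_(rar (o' : rsym (vaddr S))) -> dom M) -> Prop with
              | Some r => @irel _ M r | None => fun args => P (args ord0) end).

Definition reduct A B (h : vmorph A B) (N : structure B) : structure A :=
  @mkStructure A (dom N) (dom_pt N)
   (fun f args => @ifun _ N (mf h f) (fun i => args (cast_ord (mf_ar h f) i)))
   (fun r args => @irel _ N (mr h r) (fun i => args (cast_ord (mr_ar h r) i))).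

Definition Nc S (N : structure (vdouble S)) (d : dom N) : structure (vdouble (vaddc S)) :=
  @mkStructure (vdouble (vaddc S)) (dom N) (dom_pt N)
   (fun s => match s as s' return ('I_(far (s' : Defs.fsym (funs (vdouble (vaddc S))))) -> dom N) -> dom N with
     | inl o => match o as o' return ('I_(far (inl o' : Defs.fsym (funs (vdouble (vaddc S))))) -> dom N) -> dom N with
                | Some g => @ifun _ N (inl g) | None => fun _ => d end
     | inr o => match o as o' return ('I_(far (inr o' : Defs.fsym (funs (vdouble (vaddc S))))) -> dom N) -> dom N with
                | Some g => @ifun _ N (inr g) | None => fun _ => d end
     end)
   (@irel _ N).

Definition Nr S (N : structure (vdouble S)) (P0 P1 : dom N -> Prop) : structure (vdouble (vaddr S)) :=
  @mkStructure (vdouble (vaddr S)) (dom N) (dom_pt N) (@ifun _ N)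
   (fun s => match s as s' return ('I_(rar (s' : rsym (vdouble (vaddr S)))) -> dom N) -> Prop with
     | inl o => match o as o' return ('I_(rar (inl o' : rsym (vdouble (vaddr S)))) -> dom N) -> Prop with
                | Some r => @irel _ N (inl r) | None => fun a => P0 (a ord0) end
     | inr o => match o as o' return ('I_(rar (inr o' : rsym (vdouble (vaddr S)))) -> dom N) -> Prop with
                | Some r => @irel _ N (inr r) | None => fun a => P1 (a ord0) end
     end).

Lemma teval_ext A (M : structure A) pt fM rM
  (Hf : forall f args, fM f args = @ifun _ M f args) e t :
  @teval _ (@mkStructure A (dom M) pt fM rM) e t = @teval _ M e t.
Proof.
elim: t => [i|f args IH] //=; rewrite Hf; congr (@ifun _ M f).
by apply: functional_extensionality => i; exact: IH.
Qed.

Lemma sat_ext A (M : structure A) pt fM rM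
  (Hf : forall f args, fM f args = @ifun _ M f args)
  (Hr : forall r args, rM r args <-> @irel _ M r args) e a :
  @sat _ (@mkStructure A (dom M) pt fM rM) e a <-> @sat _ M e a.
Proof.
elim: a e => [|t1 t2|r args|b IHb|b IHb c IHc|b IHb c IHc|b IHb c IHc|b IHb|b IHb] e /=.
- by [].
- by rewrite !teval_ext.
- have -> : (fun i => @teval _ (@mkStructure A (dom M) pt fM rM) e (args i)) = (fun i => @teval _ M e (args i)).
    by apply: functional_extensionality => i; rewrite teval_ext.
  exact: Hr.
- by have := IHb e; tauto.
- by have := IHb e; have := IHc e; tauto.
- by have := IHb e; have := IHc e; tauto.
- by have := IHb e; have := IHc e; tauto.
- by split=> H d; apply/IHb; apply: H.
- by split=> [[d H]|[d H]]; exists d; apply/IHb.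
Qed.

Lemma teval_fren A B (h : vmorph A B) (N : structure B) e t :
  @teval _ N e (tren (mf_ar h) t) = @teval _ (reduct h N) e t.
Proof.
elim: t => [i|f args IH] //=; congr (@ifun _ N (mf h f)).
by apply: functional_extensionality => i; exact: IH.
Qed.

Lemma sat_fren A B (h : vmorph A B) (N : structure B) e a :
  @sat _ N e (fren h a) <-> @sat _ (reduct h N) e a.
Proof.
elim: a e => [|t1 t2|r args|b IHb|b IHb c IHc|b IHb c IHc|b IHb c IHc|b IHb|b IHb] e /=.
- by [].
- by rewrite !teval_fren.
- have -> : (fun i => @teval _ N e (tren (mf_ar h) (args (cast_ord (mr_ar h r) i)))) = (fun i => @teval _ (reduct h N) e (args (cast_ord (mr_ar h r) i))).
    by apply: functional_extensionality => i; rewrite teval_fren.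
  by [].
- by have := IHb e; tauto.
- by have := IHb e; have := IHc e; tauto.
- by have := IHb e; have := IHc e; tauto.
- by have := IHb e; have := IHc e; tauto.
- by split=> H d; apply/IHb; apply: H.
- by split=> [[d H]|[d H]]; exists d; apply/IHb.
Qed.

Ltac logic IHb IHc e := first [ by have := IHb e; have := IHc e; tauto | by have := IHb e; tauto ].

Lemma teval_subst S (M : structure S) e sigma t :
  @teval _ M e (tsubst sigma t) = @teval _ M (fun i => @teval _ M e (sigma i)) t.
Proof.
elim: t => [i|f args IH] //=; congr (@ifun _ M f).
by apply: functional_extensionality => i; exact: IH.
Qed.

Lemma env_up S (M : structure S) e d (sigma : nat -> term (funs S)) :
  (fun i => @teval _ M (scons d e) (up sigma i)) = scons d (fun i => @teval _ M e (sigma i)).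
Proof.
apply: functional_extensionality => -[|k] //=.
by rewrite teval_subst.
Qed.

Lemma sat_subst S (M : structure S) e sigma a :
  @sat _ M e (fsubst sigma a) <-> @sat _ M (fun i => @teval _ M e (sigma i)) a.
Proof.
elim: a e sigma => [|t1 t2|r args|b IHb|b IHb c IHc|b IHb c IHc|b IHb c IHc|b IHb|b IHb] e sigma /=.
- by [].
- by rewrite !teval_subst.
- have -> : (fun i => @teval _ M e (tsubst sigma (args i))) = (fun i => @teval _ M (fun i => @teval _ M e (sigma i)) (args i)).
    by apply: functional_extensionality => i; rewrite teval_subst.
  by [].
- by have := IHb e sigma; tauto.
- by have := IHb e sigma; have := IHc e sigma; tauto.
- by have := IHb e sigma; have := IHc e sigma; tauto.
- by have := IHb e sigma; have := IHc e sigma; tauto.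
- by split=> H d; move: (IHb (scons d e) (up sigma)); rewrite env_up => E; apply/E; apply: H.
- by split=> -[d H]; exists d; move: (IHb (scons d e) (up sigma)); rewrite env_up => E; apply/E.
Qed.

Lemma teval_bound S (M : structure S) n t e e' :
  tbound n t -> (forall i, i < n -> e i = e' i) -> @teval _ M e t = @teval _ M e' t.
Proof.
move=> Hb He; elim: t Hb => [i|f args IH] /= Hb; first exact: He.
congr (@ifun _ M f); apply: functional_extensionality => i; exact: IH.
Qed.

Lemma sat_bound S (M : structure S) n a e e' :
  fbound n a -> (forall i, i < n -> e i = e' i) -> (@sat _ M e a <-> @sat _ M e' a).
Proof.
elim: a n e e' => [|t1 t2|r args|b IHb|b IHb c IHc|b IHb c IHc|b IHb c IHc|b IHb|b IHb] n e e' /= Hb He.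
- by [].
- by case: Hb => H1 H2; rewrite (teval_bound (M:=M) H1 He) (teval_bound (M:=M) H2 He).
- have -> : (fun i => @teval _ M e (args i)) = (fun i => @teval _ M e' (args i)).
    by apply: functional_extensionality => i; rewrite (teval_bound (M:=M) (Hb i) He).
  by [].
- by have := IHb n e e' Hb He; tauto.
- by case: Hb => H1 H2; have := IHb n e e' H1 He; have := IHc n e e' H2 He; tauto.
- by case: Hb => H1 H2; have := IHb n e e' H1 He; have := IHc n e e' H2 He; tauto.
- by case: Hb => H1 H2; have := IHb n e e' H1 He; have := IHc n e e' H2 He; tauto.
- have He' : forall d i, i < n.+1 -> scons d e i = scons d e' i by move=> d [|i] //= /He.
  by split=> H d; have := IHb n.+1 (scons d e) (scons d e') Hb (He' d); move=> E; apply/E; apply: H.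
- have He' : forall d i, i < n.+1 -> scons d e i = scons d e' i by move=> d [|i] //= /He.
  by split=> -[d H]; exists d; have := IHb n.+1 (scons d e) (scons d e') Hb (He' d); move=> E; apply/E.
Qed.

Lemma teval_subw S (M : structure S) k t e s :
  @teval _ M e (tsubw k t s) = @teval _ (Mc (@teval _ M (fun i => e (i + k)) t)) e s.
Proof.
elim: s => [i|o args IH] //=.
case: o args IH => [f|] args IH /=.
  by congr (@ifun _ M f); apply: functional_extensionality => i; exact: IH.
by rewrite /tshift teval_subst.
Qed.

Lemma sat_subw S (M : structure S) k t e a :
  @sat _ M e (fsubw k t a) <-> @sat _ (Mc (@teval _ M (fun i => e (i + k)) t)) e a.
Proof.
elim: a k e => [|t1 t2|r args|b IHb|b IHb c IHc|b IHb c IHc|b IHb c IHc|b IHb|b IHb] k e /=.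
- by [].
- by rewrite !teval_subw.
- have -> : (fun i => @teval _ M e (tsubw k t (args i))) = (fun i => @teval _ (Mc (@teval _ M (fun i => e (i + k)) t)) e (args i)).
    by apply: functional_extensionality => i; rewrite teval_subw.
  by [].
- by have := IHb k e; tauto.
- by have := IHb k e; have := IHc k e; tauto.
- by have := IHb k e; have := IHc k e; tauto.
- by have := IHb k e; have := IHc k e; tauto.
- have E : forall d, (fun i => scons d e (i + k.+1)) = (fun i => e (i + k)).
    by move=> d; apply: functional_extensionality => i; rewrite addnS.
  by split=> H d; move: (IHb k.+1 (scons d e)); rewrite E => E'; apply/E'; apply: H.
- have E : forall d, (fun i => scons d e (i + k.+1)) = (fun i => e (i + k)).
    by move=> d; apply: functional_extensionality => i; rewrite addnS.
  by split=> -[d H]; exists d; move: (IHb k.+1 (scons d e)); rewrite E => E'; apply/E'.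
Qed.

Lemma teval_Mr S (M : structure S) P e t : @teval _ (@Mr _ M P) e t = @teval _ M e t.
Proof.
elim: t => [i|f args IH] //=; congr (@ifun _ M f).
by apply: functional_extensionality => i; exact: IH.
Qed.

Lemma sat_subst_m S (M : structure S) psi xi e (e0 : nat -> dom M) : Defs.closed psi ->
  (@sat _ M e (subst_m psi xi) <-> @sat _ (@Mr _ M (fun d => @sat _ (Mc d) e0 psi)) e xi).
Proof.
move=> Cpsi.
elim: xi e => [|t1 t2|r args|b IHb|b IHb c IHc|b IHb c IHc|b IHb c IHc|b IHb|b IHb] e /=.
- by [].
- by rewrite !teval_Mr.
- case: r args => [r|] args /=.
    have -> : (fun i => @teval _ (@Mr _ M (fun d => @sat _ (Mc d) e0 psi)) e (args i)) = (fun i => @teval _ M e (args i)).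
      by apply: functional_extensionality => i; rewrite teval_Mr.
    by [].
  rewrite teval_Mr /subst_w.
  apply: iff_trans (sat_subw (M:=M) 0 (args ord0) e psi) _.
  have -> : (fun i => e (i + 0)) = e by apply: functional_extensionality => i; rewrite addn0.
  exact: sat_bound Cpsi _.
- by have := IHb e; tauto.
- by have := IHb e; have := IHc e; tauto.
- by have := IHb e; have := IHc e; tauto.
- by have := IHb e; have := IHc e; tauto.
- by split=> H d; apply/IHb; apply: H.
- by split=> [[d H]|[d H]]; exists d; apply/IHb.
Qed.

Lemma tbound_shift F n k (t : term F) : tbound n t -> tbound (k + n) (tshift k t).
Proof.
elim: t => [i|f args IH] /=; last by move=> H i; apply: IH.
by move=> H; rewrite /= addnC ltn_add2l.
Qed.

Lemma tbound_subw F k n (t : term F) s : tbound k s -> tbound n t -> tbound (k + n) (tsubw k t s).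
Proof.
move=> + Ht; elim: s => [i|o args IH] /=.
  by move=> H; apply: ltn_addr.
case: o args IH => [f|] args IH /= H; last exact: tbound_shift.
by move=> i; apply: IH.
Qed.

Lemma fbound_subw S k n t (a : formula (vaddc S)) : fbound k a -> tbound n t -> fbound (k + n) (fsubw k t a).
Proof.
move=> + Ht; elim: a k => [|t1 t2|r args|b IHb|b IHb c IHc|b IHb c IHc|b IHb c IHc|b IHb|b IHb] k /=.
- by [].
- by case=> ??; split; apply: tbound_subw.
- by move=> H i; apply: tbound_subw.
- exact: IHb.
- by case=> ??; split; [apply: IHb|apply: IHc].
- by case=> ??; split; [apply: IHb|apply: IHc].
- by case=> ??; split; [apply: IHb|apply: IHc].
- by move=> H; rewrite -addSn; apply: IHb.
- by move=> H; rewrite -addSn; apply: IHb.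
Qed.

Lemma fbound_subst_m S psi (xi : formula (vaddr S)) n : Defs.closed psi -> fbound n xi -> fbound n (subst_m psi xi).
Proof.
move=> Cpsi; elim: xi n => [|t1 t2|r args|b IHb|b IHb c IHc|b IHb c IHc|b IHb c IHc|b IHb|b IHb] n /=.
- by [].
- by [].
- case: r args => [r|] args //= H.
  by rewrite /subst_w -(add0n n); apply: fbound_subw.
- exact: IHb.
- by case=> ??; split; [apply: IHb|apply: IHc].
- by case=> ??; split; [apply: IHb|apply: IHc].
- by case=> ??; split; [apply: IHb|apply: IHc].
- exact: IHb.
- exact: IHb.
Qed.

Lemma sat_incl_c S (M : structure S) (d : dom M) e a :
  @sat _ (Mc d) e (fren (incl_c S) a) <-> @sat _ M e a.
Proof.
apply: iff_trans (sat_fren _ _ _) _.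
apply: (sat_ext (M:=M)) => [f args|r args] /=; by rewrite cast_fun.
Qed.

Lemma sat_incl_r S (M : structure S) (P : dom M -> Prop) e a :
  @sat _ (@Mr _ M P) e (fren (incl_r S) a) <-> @sat _ M e a.
Proof.
apply: iff_trans (sat_fren _ _ _) _.
apply: (sat_ext (M:=M)) => [f args|r args] /=; by rewrite cast_fun.
Qed.

Lemma sat_Nc_dbl S (N : structure (vdouble S)) (d : dom N) e a :
  @sat _ (Nc d) e (fren (dbl_c S) a) <-> @sat _ N e a.
Proof.
apply: iff_trans (sat_fren _ _ _) _.
apply: (sat_ext (M:=N)) => [[f|f] args|[r|r] args] /=; by rewrite cast_fun.
Qed.

Lemma sat_Nr_dbl S (N : structure (vdouble S)) P0 P1 e a :
  @sat _ (@Nr _ N P0 P1) e (fren (dbl_r S) a) <-> @sat _ N e a.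
Proof.
apply: iff_trans (sat_fren _ _ _) _.
apply: (sat_ext (M:=N)) => [[f|f] args|[r|r] args] /=; by rewrite cast_fun.
Qed.

Lemma sat_Nc_left S (N : structure (vdouble S)) (d : dom N) e a :
  @sat _ (Nc d) e (fren (vleft (vaddc S)) a) <-> @sat _ (@Mc _ (reduct (vleft S) N) d) e a.
Proof.
apply: iff_trans (sat_fren _ _ _) _.
apply: (sat_ext (M:=@Mc _ (reduct (vleft S) N) d)) => [[f|] args|r args] /=; by rewrite ?cast_fun ?cast_ord_id.
Qed.

Lemma sat_Nc_right S (N : structure (vdouble S)) (d : dom N) e a :
  @sat _ (Nc d) e (fren (vright (vaddc S)) a) <-> @sat _ (@Mc _ (reduct (vright S) N) d) e a.
Proof.
apply: iff_trans (sat_fren _ _ _) _.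
apply: (sat_ext (M:=@Mc _ (reduct (vright S) N) d)) => [[f|] args|r args] /=; by rewrite ?cast_fun ?cast_ord_id.
Qed.

Lemma sat_Nr_left S (N : structure (vdouble S)) P0 P1 e a :
  @sat _ (@Nr _ N P0 P1) e (fren (vleft (vaddr S)) a) <-> @sat _ (@Mr _ (reduct (vleft S) N) P0) e a.
Proof.
apply: iff_trans (sat_fren _ _ _) _.
apply: (sat_ext (M:=@Mr _ (reduct (vleft S) N) P0)) => [f args|[r|] args] /=; by rewrite ?cast_fun ?cast_ord_id.
Qed.

Lemma sat_Nr_right S (N : structure (vdouble S)) P0 P1 e a :
  @sat _ (@Nr _ N P0 P1) e (fren (vright (vaddr S)) a) <-> @sat _ (@Mr _ (reduct (vright S) N) P1) e a.
Proof.
apply: iff_trans (sat_fren _ _ _) _.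
apply: (sat_ext (M:=@Mr _ (reduct (vright S) N) P1)) => [f args|[r|] args] /=; by rewrite ?cast_fun ?cast_ord_id.
Qed.

Lemma sat_phi_w S (M : structure S) (d : dom M) E phi :
  @sat _ (Mc d) E (phi_w phi) <-> @sat _ M (scons d E) phi.
Proof.
rewrite /phi_w; apply: iff_trans (sat_subst _ _ _) _.
have -> : (fun i => @teval _ (Mc d) E (scons (wconst (funs S)) (fun k => tvar k) i)) = scons d E.
  by apply: functional_extensionality => -[|i].
exact: sat_incl_c.
Qed.
Unset Implicit Arguments.

Lemma closed_move {S} {M : structure S} {a} {e e' : nat -> dom M} :
  Defs.closed a -> @sat _ M e a -> @sat _ M e' a.
Proof. by move=> H; apply: (iffLR (sat_bound H _)). Qed.

Lemma phi_move {S} {M : structure S} {a d} {e e' : nat -> dom M} :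
  fbound 1 a -> @sat _ M (scons d e) a -> @sat _ M (scons d e') a.
Proof. by move=> H; apply: (iffLR (sat_bound H _)); case. Qed.

Theorem lemmaA1 (S : vocab) (P : safety S) (phi : formula S)
    (xi : formula (vaddr S)) (psi : formula (vaddc S)) :
  is_safety P ->
  fbound 1 phi ->
  soundness_inv P phi xi ->
  safe_inv (Pi_w P phi) psi ->
  safe_inv P (subst_m psi xi).
Proof.
move=> [Hi [Ht Hb]] Hphi [Cxi Ixi Txi Bxi] [Cpsi Ipsi Tpsi Bpsi].
have Bnd0 : forall T (e e' : nat -> T) i, i < 0 -> e i = e' i by [].
have Bnd1 : forall T (d : T) e e' i, i < 1 -> scons d e i = scons d e' i by move=> T d e e' [].
split.
- exact: fbound_subst_m.
- move=> M e /= Hinit.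
  apply/(sat_subst_m xi e (fun _ => dom_pt M) Cpsi).
  apply: (Ixi (@Mr _ M (fun d => @sat _ (Mc d) (fun _ => dom_pt M) psi)) e) => /=; split.
    by apply/sat_incl_r.
  move=> d /sat_incl_r Hp.
  apply: (Ipsi (Mc d) (fun _ => dom_pt M)) => /=; split.
    by apply/sat_incl_c; exact: (closed_move Hi Hinit).
  by apply/sat_phi_w; exact: (phi_move Hphi Hp).
- move=> N e /= [Hchi Htr].
  set E := fun _ : nat => dom_pt N.
  set M0 := reduct (vleft S) N.
  set M1 := reduct (vright S) N.
  set Pm0 := fun d : dom N => @sat _ (@Mc _ M0 d) E psi.
  set Pm1 := fun d : dom N => @sat _ (@Mc _ M1 d) E psi.
  move/sat_fren: Hchi => /(sat_subst_m (M:=M0) xi e E Cpsi) Hchi.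
  apply/sat_fren; apply/(sat_subst_m (M:=M1) xi e E Cpsi).
  apply/(sat_Nr_right (P0:=Pm0)).
  apply: (Txi (@Nr _ N Pm0 Pm1) e) => /=; split; first by apply/sat_Nr_left.
  split; first by apply/sat_Nr_dbl.
  move=> d /= [[H0 /sat_Nr_left /sat_incl_r Hp0] /sat_Nr_right /sat_incl_r Hp1].
  apply/(sat_Nc_right (N:=N) (d:=d)).
  apply: (Tpsi (Nc d) E) => /=; split; first by apply/sat_Nc_left.
  split; last by apply/sat_Nc_right; apply/sat_phi_w; exact: (phi_move Hphi Hp1).
  split; last by [].
  split; first by apply/sat_Nc_left; apply/sat_phi_w; exact: (phi_move Hphi Hp0).
  by apply/sat_Nc_dbl; exact: (closed_move Ht Htr).
- move=> M e /= Hchi Hbad.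
  move/(sat_subst_m xi e (fun _ => dom_pt M) Cpsi): Hchi => Hxi.
  apply: (Bxi _ _ Hxi) => /=; split; first by apply/sat_incl_r.
  move=> d /sat_incl_r Hp Hpm.
  apply: (Bpsi _ _ Hpm) => /=; split.
    by apply/sat_incl_c; exact: (closed_move Hb Hbad).
  by apply/sat_phi_w; exact: (phi_move Hphi Hp).
Qed.
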